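(* Let $X$ be a permutation group on a set $U$ and $Y$ a permutation group on a set $W$, and let $G=X\times Y$ act on $U\times W$ in product action. Let $\Gamma$ be a $G$-arc-transitive digraph with vertex set $U\times W$. Then $\Gamma\cong\Gamma_1\times\Gamma_2$ for some $X$-arc-transitive digraph $\Gamma_1$ and some $Y$-arc-transitive digraph $\Gamma_2$.
   Context: A digraph is a pair $(V,A)$ with $A\subseteq V\times V$. For a group $H$ acting on the vertex set of a digraph $\Delta$ by automorphisms, $\Delta$ is $H$-arc-transitive if $H$ is transitive on the arc set of $\Delta$. Product action: $(x,y)\in X\times Y$ sends $(u,w)$ to $(u^x,w^y)$. The tensor product $\Gamma_1\times\Gamma_2$ of $\Gamma_1=(V_1,A_1)$ and $\Gamma_2=(V_2,A_2)$ has vertex set $V_1\times V_2$, with $(u_1,u_2)$ pointing to $(v_1,v_2)$ iff $(u_1,v_1)\in A_1$ and $(u_2,v_2)\in A_2$. *)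

(* Defs.v *)
From mathcomp Require Import all_boot all_fingroup.
Set Implicit Arguments. Unset Strict Implicit. Unset Printing Implicit Defensive.

(* A digraph on a finite vertex type V is given by its arc set A : {set V * V}. *)

Definition arc_transitive (gT : finGroupType) (V : finType)
  (act : V -> gT -> V) (H : {set gT}) (A : {set V * V}) : Prop :=
  (forall h, h \in H -> forall u v,
      ((act u h, act v h) \in A) = ((u, v) \in A)) /\
  (forall a b, a \in A -> b \in A ->
      exists2 h, h \in H & (act a.1 h, act a.2 h) = b).

Definition pact (T : finType) (u : T) (x : {perm T}) : T := x u.

Definition prod_act (U W : finType) (p : U * W) (g : {perm U} * {perm W})
  : U * W := (g.1 p.1, g.2 p.2).

Definition tensor (U W : finType) (A1 : {set U * U}) (A2 : {set W * W})
  : {set (U * W) * (U * W)} :=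
  [set p | ((p.1.1, p.2.1) \in A1) && ((p.1.2, p.2.2) \in A2)].

Definition dig_iso (V1 V2 : finType) (A : {set V1 * V1}) (B : {set V2 * V2})
  : Prop :=
  exists f : V1 -> V2, bijective f /\
    forall u v, ((f u, f v) \in B) = ((u, v) \in A).

(* Main.v *)
Require Import Defs.
From mathcomp Require Import all_boot all_fingroup all_solvable.

Theorem lemma2p6 (U W : finType) (X : {group {perm U}}) (Y : {group {perm W}})
  (A : {set (U * W) * (U * W)}) :
  arc_transitive (@prod_act U W) (setX X Y) A ->
  exists (A1 : {set U * U}) (A2 : {set W * W}),
    [/\ arc_transitive (@pact U) X A1,
        arc_transitive (@pact W) Y A2 &
        dig_iso A (tensor A1 A2)].
Proof.
move=> [inv tr].
pose A1 := [set p : U * U | [exists q : W * W, ((p.1, q.1), (p.2, q.2)) \in A]].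
pose A2 := [set p : W * W | [exists q : U * U, ((q.1, p.1), (q.2, p.2)) \in A]].
have inA1 : forall u v, ((u, v) \in A1) <-> exists w w', ((u, w), (v, w')) \in A.
  move=> u v; rewrite inE; split.
    by case/existsP=> [[w w']] /= H; exists w, w'.
  by case=> w [w' H]; apply/existsP; exists (w, w').
have inA2 : forall w w', ((w, w') \in A2) <-> exists u v, ((u, w), (v, w')) \in A.
  move=> w w'; rewrite inE; split.
    by case/existsP=> [[u v]] /= H; exists u, v.
  by case=> u [v H]; apply/existsP; exists (u, v).
have gX : forall x, x \in X -> ((x, 1%g) : {perm U} * {perm W}) \in setX X Y.
  by move=> x Hx; rewrite in_setX Hx group1.
have gY : forall y, y \in Y -> ((1%g, y) : {perm U} * {perm W}) \in setX X Y.
  by move=> y Hy; rewrite in_setX Hy group1.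
exists A1, A2; split.
- split.
  + move=> x Hx u v; rewrite /pact.
    apply/idP/idP.
      move/inA1=> [w [w' H]]; apply/inA1; exists w, w'.
      have := inv _ (gX _ (groupVr Hx)) (x u, w) (x v, w').
      by rewrite /prod_act /= !permK !perm1 H => ->.
    move/inA1=> [w [w' H]]; apply/inA1; exists w, w'.
    have := inv _ (gX _ Hx) (u, w) (v, w').
    by rewrite /prod_act /= !perm1 H.
  + move=> [a1 a2] [b1 b2] /inA1 [w [w' Ha]] /inA1 [z [z' Hb]].
    have [[gx gy] Hg E] := tr _ _ Ha Hb.
    exists gx; first by move: Hg; rewrite in_setX => /andP[].
    by rewrite /pact; case: E => /= -> _ -> _.
- split.
  + move=> y Hy w w'; rewrite /pact.
    apply/idP/idP.
      move/inA2=> [u [v H]]; apply/inA2; exists u, v.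
      have := inv _ (gY _ (groupVr Hy)) (u, y w) (v, y w').
      by rewrite /prod_act /= !permK !perm1 H => ->.
    move/inA2=> [u [v H]]; apply/inA2; exists u, v.
    have := inv _ (gY _ Hy) (u, w) (v, w').
    by rewrite /prod_act /= !perm1 H.
  + move=> [a1 a2] [b1 b2] /inA2 [u [v Ha]] /inA2 [z [z' Hb]].
    have [[gx gy] Hg E] := tr _ _ Ha Hb.
    exists gy; first by move: Hg; rewrite in_setX => /andP[].
    by rewrite /pact; case: E => /= _ -> _ ->.
- exists id; split; first by exists id.
  move=> [u1 u2] [v1 v2]; rewrite inE /=.
  apply/andP/idP.
    move=> [/inA1 [w [w' Ha]] /inA2 [z [z' Hb]]].
    have [[gx gy] Hg E] := tr _ _ Ha Hb.
    move: Hg; rewrite in_setX => /andP[_ Hy].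
    case: E => _ Ew _ Ew'.
    have := inv _ (gY _ Hy) (u1, w) (v1, w').
    by rewrite /prod_act /= !perm1 Ew Ew' Ha.
  move=> H; split; first by apply/inA1; exists u2, v2.
  by apply/inA2; exists u1, v1.
Qed.
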